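(* Let $E$ be an elliptic curve over $\mathbb{R}$, $P_1,\ldots,P_n\in E(\mathbb{R})$ linearly independent, with attached $q$ and $u_1,\ldots,u_n$ (normalized so that $q<|u_i|<1$ if $q>0$ and $q^2<u_i<1$ if $q<0$), and suppose $u_1,\ldots,u_k<0$, $u_{k+1},\ldots,u_n>0$ for some $0\le k\le n$. Then $\theta(u_i,q)>0$ for every $i$.
   Context: $\theta(x,q)=(1-x)\prod_{m\ge1}\frac{(1-q^mx)(1-q^mx^{-1})}{(1-q^m)^2}$ for real $x\notin q^{\mathbb{Z}}$, $0<|q|<1$. Tate parametrization: for $E/\mathbb{R}$ there is a unique real $q$, $0<|q|<1$, and an $\mathbb{R}$-analytic group isomorphism $\psi:\mathbb{R}^*/q^{\mathbb{Z}}\to E(\mathbb{R})$ (restriction of an isomorphism $\mathbb{C}^*/q^{\mathbb{Z}}\to E(\mathbb{C})$ commuting with conjugation, from Tate's uniformization of $E_q\cong_{\mathbb{R}}E$); $u_i\in\mathbb{R}^*$ is the normalized representative of $\psi^{-1}(P_i)$. *)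

(* Defs.v *)
From HB Require Import structures.
From mathcomp Require Import all_boot all_order all_algebra.
From mathcomp Require Import all_classical all_reals all_analysis.
Set Implicit Arguments. Unset Strict Implicit. Unset Printing Implicit Defensive.
Import Order.TTheory GRing.Theory Num.Theory.
Import numFieldNormedType.Exports.
Local Open Scope ring_scope.

Definition theta_partial (R : realType) (x q : R) (N : nat) : R :=
  \prod_(1 <= m < N.+1) ((1 - q ^+ m * x) * (1 - q ^+ m / x) / (1 - q ^+ m) ^+ 2).

(* theta(x,q) = (1-x) * prod_{m>=1} ..., the infinite product being the limit
   of the partial products (it converges for 0<|q|<1, x not in q^Z). *)
Definition theta (R : realType) (x q : R) : R :=
  (1 - x) * limn (theta_partial x q).

(* Abstract Tate isomorphism psi : R^x / q^Z -> E(R), presented as a map on nonzero reals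
   which is a group morphism from the multiplicative group of nonzero reals to (E,+), surjective, with kernel q^Z. *)
Definition tate_iso (R : realType) (E : zmodType) (q : R) (psi : R -> E) : Prop :=
  [/\ (forall x y : R, x != 0 -> y != 0 -> psi (x * y) = psi x + psi y),
      (forall x : R, x != 0 -> (psi x = 0 <-> exists k : int, x = q ^ k))
    & (forall Pt : E, exists2 x : R, x != 0 & psi x = Pt)].

Definition normalized (R : realType) (q u : R) : Prop :=
  if 0 < q then q < `|u| < 1 else q ^+ 2 < u < 1.

Definition lin_indep (E : zmodType) (n : nat) (P : 'I_n -> E) : Prop :=
  forall c : 'I_n -> int, \sum_(i < n) P i *~ c i = 0 -> forall i, c i = 0.

(* Main.v *)
Require Import Defs.
From HB Require Import structures.
From mathcomp Require Import all_boot all_order all_algebra.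
From mathcomp Require Import all_classical all_reals all_analysis.
From mathcomp Require Import ring lra.
Import Order.TTheory GRing.Theory Num.Theory.
Import numFieldNormedType.Exports.
Local Open Scope classical_set_scope.
Local Open Scope ring_scope.
Lemma abs_ln_le (R : realType) (a c : R) : 0 < c -> c <= 1 -> c <= a ->
  `|ln a| <= `|a - 1| / c.
Proof.
move=> c0 c1 ca.
have a0 : 0 < a by apply: lt_le_trans ca.
have h1 : `|a - 1| <= `|a - 1| / c.
  rewrite ler_pdivlMr //; have := normr_ge0 (a - 1); nra.
case: (leP 0 (ln a)) => la.
- rewrite ger0_norm //; apply: le_trans h1; apply: le_trans (ler_norm _).
  have := @le_ln1Dx R (a - 1); rewrite addrCA subrr addr0; apply.
  lra.
- rewrite ltr0_norm // -lnV ?posrE //.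
  have := @le_ln1Dx R (a^-1 - 1); rewrite addrCA subrr addr0 => H.
  have ai : 0 < a^-1 by rewrite invr_gt0.
  apply: le_trans (H _) _; first by lra.
  have -> : a^-1 - 1 = (1 - a) / a by field; rewrite gt_eqF.
  apply: le_trans (ler_norm _) _.
  rewrite normrM distrC normrV ?unitfE ?gt_eqF // gtr0_norm //.
  by rewrite ler_wpM2l ?normr_ge0 // lef_pV2 ?posrE.
Qed.

Lemma prod_cvg (R : realType) (t : nat -> R) (c K r : R) :
  0 < c -> c <= 1 -> (forall m, c <= 1 - t m) -> 0 <= K -> 0 <= r < 1 ->
  (forall m, `|t m| <= K * r ^+ m) ->
  exists2 L : R, 0 < L & (fun N => \prod_(0 <= m < N) (1 - t m)) @ \oo --> L.
Proof.
move=> c0 c1 ct K0 /andP[r0 r1] tb.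
pose l := fun m => ln (1 - t m).
have hl : forall m, `|l m| <= geometric (K / c) r m.
  move=> m; rewrite /l /geometric /=.
  apply: le_trans (@abs_ln_le R _ _ c0 c1 (ct m)) _.
  rewrite addrAC subrr add0r normrN mulrAC ler_pM2r ?invr_gt0 //.
have cn : cvgn [normed series l].
  apply: (@series_le_cvg R (fun m => `|l m|) (geometric (K / c) r)) => //.
  - move=> m; rewrite /geometric /=; apply: mulr_ge0; last exact: exprn_ge0.
    by apply: divr_ge0 => //; exact: ltW.
  - by apply: is_cvg_geometric_series; rewrite ger0_norm.
have cs := normed_cvg cn.
exists (expR (limn (series l))); first exact: expR_gt0.
have -> : (fun N => \prod_(0 <= m < N) (1 - t m)) = expR \o series l.
  apply: funext => N; rewrite /= /series /= expR_sum; apply: eq_bigr => m _.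
  by rewrite /l lnK // posrE; apply: lt_le_trans (ct m).
by apply: continuous_cvg; [exact: continuous_expR | exact: cs].
Qed.
Lemma theta_pos (R : realType) (x q : R) : 0 < `|q| < 1 -> normalized q x ->
  0 < theta x q.
Proof.
move=> /andP[q0 q1] nx.
have qm : forall m, `|q| ^+ m <= 1 by move=> m; exact: exprn_ile1 (normr_ge0 _) (ltW q1).
have qm1 : forall m, `|q| ^+ m.+1 <= `|q| by move=> m; rewrite exprS ler_piMr // qm.
have [x0 x1 xn1] : [/\ x != 0, x < 1 & `|x| < 1].
  move: nx; rewrite /normalized; case: ifP => [qp /andP[a b]|qn /andP[a b]].
  - split => //; last by apply: le_lt_trans (ler_norm _) b.
    by rewrite -normr_gt0 (lt_trans qp).
  - have xp : 0 < x by apply: le_lt_trans a; exact: sqr_ge0.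
    by rewrite gt_eqF // ger0_norm ?ltW.
have xa : 0 < `|x| by rewrite normr_gt0.
pose t1 := fun m => q ^+ m.+1 * x.
pose t2 := fun m => q ^+ m.+1 / x.
pose t3 := fun m => q ^+ m.+1.
have c0 : 0 < 1 - `|q| by lra.
have c1 : 1 - `|q| <= 1 by lra.
have [L1 L1p H1] : exists2 L : R, 0 < L & (fun N => \prod_(0 <= m < N) (1 - t1 m)) @ \oo --> L.
  apply: (@prod_cvg R t1 (1 - `|q|) 1 `|q|) => //.
  - move=> m; rewrite /t1; suff : `|q ^+ m.+1 * x| <= `|q| by move=> h; have := ler_norm (q ^+ m.+1 * x); lra.
    rewrite normrM normrX; apply: le_trans (qm1 m); rewrite ler_piMr //; exact: ltW.
  - by rewrite q1 normr_ge0.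
  - move=> m; rewrite /t1 mul1r normrM normrX exprS mulrAC.
    apply: ler_piMl; first exact: exprn_ge0.
    have := normr_ge0 q; have := normr_ge0 x; nra.
have [L3 L3p H3] : exists2 L : R, 0 < L & (fun N => \prod_(0 <= m < N) (1 - t3 m)) @ \oo --> L.
  apply: (@prod_cvg R t3 (1 - `|q|) 1 `|q|) => //.
  - move=> m; rewrite /t3; have := ler_norm (q ^+ m.+1); have := qm1 m; rewrite normrX; lra.
  - by rewrite q1 normr_ge0.
  - move=> m; rewrite /t3 mul1r normrX exprS.
    apply: ler_piMl; [exact: exprn_ge0 | exact: ltW].
have [c2 [c2p c2l c2t]] : exists c : R, [/\ 0 < c, c <= 1 & forall m, c <= 1 - t2 m].
  move: nx; rewrite /normalized; case: ifP => [qp /andP[a b]|qn /andP[a b]].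
  - have qa : q / `|x| < 1 by rewrite ltr_pdivrMr // mul1r.
    have qa0 : 0 <= q / `|x| by rewrite divr_ge0 // ltW.
    exists (1 - q / `|x|); split; [lra|lra|] => m.
    suff : `|t2 m| <= q / `|x| by have := ler_norm (t2 m); lra.
    rewrite /t2 normrM normrX normrV ?unitfE // ler_pM2r ?invr_gt0 //.
    by rewrite -{2}(gtr0_norm qp).
  - have qneg : q < 0.
      by move: qn q0; rewrite normr_gt0; case: ltgtP.
    have xp : 0 < x by apply: le_lt_trans a; exact: sqr_ge0.
    have q2 : 0 < q ^+ 2 by rewrite expr2; nra.
    have qa : q ^+ 2 / x < 1 by rewrite ltr_pdivrMr // mul1r.
    have qa0 : 0 < q ^+ 2 / x by rewrite divr_gt0.
    exists (1 - q ^+ 2 / x); split; [lra|lra|] => -[|m].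
    + rewrite /t2 expr1; have : q / x < 0 by rewrite ltr_pdivrMr // mul0r. lra.
    + suff : `|t2 m.+1| <= q ^+ 2 / x by have := ler_norm (t2 m.+1); lra.
      rewrite /t2 normrM normrX normrV ?unitfE ?gt_eqF // (gtr0_norm xp).
      rewrite ler_pM2r ?invr_gt0 // -(real_normK (num_real q)).
      by apply: ler_wiXn2l => //; exact: ltW.
have [L2 L2p H2] : exists2 L : R, 0 < L & (fun N => \prod_(0 <= m < N) (1 - t2 m)) @ \oo --> L.
  apply: (@prod_cvg R t2 c2 `|x|^-1 `|q|) => //.
  - by rewrite q1 normr_ge0.
  - move=> m; rewrite /t2 normrM normrX normrV ?unitfE // mulrC ler_pM2l ?invr_gt0 //.
    by rewrite exprS ler_piMl ?exprn_ge0 // ltW.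
have E : theta_partial x q = fun N => (\prod_(0 <= m < N) (1 - t1 m)) * (\prod_(0 <= m < N) (1 - t2 m))
     * ((\prod_(0 <= m < N) (1 - t3 m)) * (\prod_(0 <= m < N) (1 - t3 m)))^-1.
  apply: funext => N; rewrite /theta_partial big_add1 /=.
  transitivity (\prod_(0 <= m < N) ((1 - t1 m) * (1 - t2 m) * ((1 - t3 m) * (1 - t3 m))^-1)).
    by apply: eq_bigr => m _; rewrite /t1 /t2 /t3 expr2.
  by rewrite big_split /= big_split /= prodfV big_split.
have HL : theta_partial x q @ \oo --> L1 * L2 * (L3 * L3)^-1.
  rewrite E; apply: cvgM; first exact: cvgM.
  apply: cvgV; first by rewrite mulf_neq0 // gt_eqF.
  exact: cvgM.
rewrite /theta (cvg_lim _ HL); last exact: Rhausdorff.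
apply: mulr_gt0; first lra.
by rewrite !mulr_gt0 // invr_gt0 mulr_gt0.
Qed.

Local Close Scope classical_set_scope.
Local Open Scope ring_scope.

Theorem corollary3p2 (R : realType) (E : zmodType) (q : R) (psi : R -> E)
    (n : nat) (P : 'I_n -> E) (u : 'I_n -> R) :
  0 < `|q| < 1 ->
  tate_iso q psi ->
  lin_indep P ->
  (forall i, [/\ u i != 0, psi (u i) = P i & normalized q (u i)]) ->
  (exists2 k : nat, (k <= n)%N &
     forall i : 'I_n, ((i < k)%N -> u i < 0) /\ ((k <= i)%N -> 0 < u i)) ->
  forall i : 'I_n, 0 < theta (u i) q.
Proof.
move=> hq _ _ hu _ i.
have [_ _ nu] := hu i.
exact: theta_pos hq nu.
Qed.
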